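(* A connected graph $G$ is Ricci-flat and has girth $g(G)\ge 5$ if and only if $G$ is one of the following: the path $P_n$ ($n\ge 2$), the infinite ray, the infinite (two-sided) path, the cycle $C_n$ ($n\ge 5$), or the star graph $T_n$ ($n\ge 3$).
   Context: Graphs are locally finite and unweighted; the girth is the length of a shortest cycle (infinite for trees). $d_G$ is the shortest-path metric, $N_G(v)$ the neighbour set and $d_v$ the degree of $v$; $m_v$ is the uniform probability measure on $N_G(v)$, and for an edge $(x,y)$, $\kappa(x,y)=1-W_1(m_x,m_y)$, where $W_1$ is the Wasserstein-1 (transportation) distance with respect to $d_G$. $G$ is Ricci-flat if $\kappa(x,y)=0$ for every edge $(x,y)\in E(G)$. $P_n$ is the path on $n$ vertices, $C_n$ the cycle on $n$ vertices, and the star $T_n$ is a tree with one central vertex adjacent to all other vertices, which are leaves. *)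

(* Defs.v *)
From HB Require Import structures.
From mathcomp Require Import all_boot all_order all_algebra.
From mathcomp Require Import classical_sets boolp reals Rstruct.
From Stdlib Require Rdefinitions.
Notation R := Rdefinitions.R.

Set Implicit Arguments.
Unset Strict Implicit.
Unset Printing Implicit Defensive.

Import Order.TTheory GRing.Theory Num.Theory.
Local Open Scope ring_scope.
Local Open Scope classical_set_scope.

(* A locally finite simple graph on a vertex type V is given by its
   (finite, duplicate-free) adjacency lists nb x = N_G(x). *)
Section Graph.
Variable V : eqType.
Variable nb : V -> seq V.

Definition adj : rel V := fun x y => y \in nb x.

Definition lf_simple_graph : Prop :=
  [/\ forall x, uniq (nb x),
      forall x, x \notin nb x &
      forall x y, (y \in nb x) = (x \in nb y)].

(* walks from x to y, given by the sequence of vertices after x *)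
Definition walk (x y : V) (p : seq V) : bool := path adj x p && (last x p == y).

Definition connected : Prop := forall x y : V, exists p, walk x y p.

Definition dist (x y : V) : R :=
  inf [set ((size p)%:R : R) | p in [set p | walk x y p]].

Definition deg (x : V) : nat := size (nb x).

Definition unif (x : V) (u : V) : R :=
  if u \in nb x then (deg x)%:R^-1 else 0.

(* transport plans (couplings) between m_x and m_y; a coupling is
   necessarily supported on supp m_x * supp m_y = N(x) * N(y) *)
Definition coupling (x y : V) (pi : V -> V -> R) : Prop :=
  [/\ forall u v, 0 <= pi u v,
      forall u v, pi u v != 0 -> (u \in nb x) && (v \in nb y),
      forall u, \sum_(v <- nb y) pi u v = unif x u &
      forall v, \sum_(u <- nb x) pi u v = unif y v].

Definition transport_cost (x y : V) (pi : V -> V -> R) : R :=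
  \sum_(u <- nb x) \sum_(v <- nb y) pi u v * dist u v.

Definition W1 (x y : V) : R :=
  inf [set transport_cost x y pi | pi in [set pi | coupling x y pi]].

Definition kappa (x y : V) : R := 1 - W1 x y.

Definition ricci_flat : Prop := forall x y, adj x y -> kappa x y = 0.

Definition graph_cycle (c : seq V) : bool :=
  [&& cycle adj c, uniq c & 3 <= size c]%N.

(* girth(G) >= g : every cycle has length >= g (girth = +oo for acyclic G) *)
Definition girth_ge (g : nat) : Prop :=
  forall c, graph_cycle c -> (g <= size c)%N.

Definition isomorphic (W : Type) (r : W -> W -> Prop) : Prop :=
  exists f : V -> W, bijective f /\ forall x y, adj x y <-> r (f x) (f y).

End Graph.

Definition path_graph (n : nat) : 'I_n -> 'I_n -> Prop :=
  fun i j => (i.+1 = j :> nat) \/ (j.+1 = i :> nat).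
Definition ray_graph : nat -> nat -> Prop :=
  fun i j => i.+1 = j \/ j.+1 = i.
Definition line_graph : int -> int -> Prop :=
  fun i j => i + 1 = j \/ j + 1 = i.
Definition cycle_graph (n : nat) : 'I_n -> 'I_n -> Prop :=
  fun i j => (j = i.+1 %% n :> nat)%N \/ (i = j.+1 %% n :> nat)%N.
(* star T_n on n vertices: center 0, leaves 1..n-1 *)
Definition star_graph (n : nat) : 'I_n -> 'I_n -> Prop :=
  fun i j => ((i = 0 :> nat) /\ (j <> 0 :> nat)) \/ ((j = 0 :> nat) /\ (i <> 0 :> nat)).

(* Main.v *)
Require Import Defs.
From HB Require Import structures.
From mathcomp Require Import all_boot all_order all_algebra.
From mathcomp Require Import classical_sets boolp reals Rstruct.
From mathcomp Require Import zify ring lra.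
Import Order.TTheory GRing.Theory Num.Theory.
Local Open Scope ring_scope.
Local Open Scope classical_set_scope.

Lemma sum_const_seq (T : Type) (s : seq T) (c : R) :
  \sum_(u <- s) c = (size s)%:R * c.
Proof.
elim: s => [|a s IH]; first by rewrite big_nil mul0r.
by rewrite big_cons IH /= -addn1 natrD mulrDl mul1r addrC.
Qed.

Section G.
Variable V : eqType.
Variable nb : V -> seq V.
Hypothesis Hg : lf_simple_graph nb.
Hypothesis Hc : connected nb.

Local Notation adj := (adj nb).
Local Notation dist := (dist nb).
Local Notation deg := (deg nb).
Local Notation unif := (unif nb).

Lemma adj_sym x y : adj x y = adj y x.
Proof. by case: Hg => _ _ H; rewrite /Defs.adj H. Qed.

Lemma adj_irr x : ~~ adj x x.
Proof. by case: Hg => _ H _; apply: H. Qed.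

Lemma adj_neq x y : adj x y -> x != y.
Proof. by apply: contraTneq => ->; apply: adj_irr. Qed.

Arguments adj_neq {x y}.
Lemma nb_uniq x : uniq (nb x).
Proof. by case: Hg. Qed.

Lemma dist_ne0 u v : [set ((size p)%:R : R) | p in [set p | walk nb u v p]] !=set0.
Proof. by case: (Hc u v) => p hp; exists (size p)%:R; exists p. Qed.

Lemma dist_ge0 u v : 0 <= dist u v.
Proof. by apply: lb_le_inf; [exact: dist_ne0| move=> _ [p _ <-]; apply: ler0n]. Qed.

Lemma dist_ge1 u v : u != v -> 1 <= dist u v.
Proof.
move=> neq; apply: lb_le_inf; first exact: dist_ne0.
move=> _ [[|a p] hp <-].
  by move: hp; rewrite /walk /= => /eqP e; rewrite e eqxx in neq.
by rewrite /= ler1n.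
Qed.

Lemma dist_ge2 u v : u != v -> ~~ adj u v -> 2 <= dist u v.
Proof.
move=> neq na; apply: lb_le_inf; first exact: dist_ne0.
move=> _ [[|a [|b p]] hp <-].
- by move: hp; rewrite /walk /= => /eqP e; rewrite e eqxx in neq.
- by move: hp; rewrite /walk /= andbT => /andP[h /eqP e]; rewrite -e h in na.
- by rewrite /= ler_nat.
Qed.

Lemma dist_le1 u v : adj u v -> dist u v <= 1.
Proof.
move=> h; apply: ge_inf.
  by exists 0 => _ [p _ <-]; apply: ler0n.
by exists [:: v] => //; rewrite /walk /= h eqxx.
Qed.

Lemma deg_gt0 x y : adj x y -> (0 < deg x)%N.
Proof. by rewrite /Defs.deg /Defs.adj; case: (nb x). Qed.

Lemma unif_in x u : u \in nb x -> unif x u = (deg x)%:R^-1.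
Proof. by rewrite /Defs.unif => ->. Qed.

Lemma unif_ge0 x u : 0 <= unif x u.
Proof. by rewrite /Defs.unif; case: ifP => // _; rewrite invr_ge0 ler0n. Qed.

Lemma sum_unif x y : adj x y -> \sum_(u <- nb x) unif x u = 1.
Proof.
move=> h; rewrite big_seq (eq_bigr (fun=> (deg x)%:R^-1)); last by move=> u; apply: unif_in.
rewrite -big_seq sum_const_seq divff //.
by rewrite pnatr_eq0 -lt0n (@deg_gt0 x y h).
Qed.

Arguments unif_in {x u}.
Definition prod_cpl x y : V -> V -> R := fun u v => unif x u * unif y v.

Lemma prod_coupling x y : adj x y -> coupling nb x y (prod_cpl x y).
Proof.
move=> h; split.
- by move=> u v; rewrite /prod_cpl mulr_ge0 // unif_ge0.
- move=> u v; rewrite /prod_cpl /Defs.unif.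
  by case: (u \in nb x); case: (v \in nb y); rewrite ?mul0r ?mulr0 ?eqxx.
- move=> u; rewrite /prod_cpl -big_distrr /= (@sum_unif y x) ?mulr1 //.
  by rewrite adj_sym.
- move=> v; rewrite /prod_cpl -big_distrl /= (@sum_unif x y h) mul1r //.
Qed.

Lemma cost_ne0 x y : adj x y ->
  [set transport_cost nb x y pi | pi in [set pi | coupling nb x y pi]] !=set0.
Proof. by move=> h; exists (transport_cost nb x y (prod_cpl x y)); exists (prod_cpl x y) => //; apply: prod_coupling. Qed.

Lemma cost_ge0 x y pi : coupling nb x y pi -> 0 <= transport_cost nb x y pi.
Proof.
case=> h0 _ _ _; rewrite /transport_cost; apply: sumr_ge0 => u _; apply: sumr_ge0 => v _.
by rewrite mulr_ge0 // dist_ge0.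
Qed.

Lemma W1_le x y pi : coupling nb x y pi -> W1 nb x y <= transport_cost nb x y pi.
Proof.
move=> hc; apply: ge_inf; last by exists pi.
by exists 0 => _ [p hp <-]; apply: cost_ge0.
Qed.

Arguments W1_le {x y pi}.
Lemma W1_ge x y c : adj x y ->
  (forall pi, coupling nb x y pi -> c <= transport_cost nb x y pi) -> c <= W1 nb x y.
Proof. by move=> h H; apply: lb_le_inf; [exact: cost_ne0| move=> _ [pi hp <-]; apply: H]. Qed.

Lemma mass x y pi : adj x y -> coupling nb x y pi ->
  \sum_(u <- nb x) \sum_(v <- nb y) pi u v = 1.
Proof.
move=> h [_ _ H _]; rewrite -(@sum_unif x y h); apply: eq_bigr => u _; exact: H.
Qed.

Lemma cost_le1 x y pi : adj x y -> coupling nb x y pi ->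
  (forall u v, pi u v != 0 -> adj u v) -> transport_cost nb x y pi <= 1.
Proof.
move=> h hc hs; rewrite -(@mass x y pi h hc) /transport_cost.
apply: ler_sum => u _; apply: ler_sum => v _.
case: (eqVneq (pi u v) 0) => [->|ne]; first by rewrite mul0r.
case: hc => h0 _ _ _.
by rewrite -{2}(mulr1 (pi u v)) ler_wpM2l // dist_le1 // hs.
Qed.


Arguments cost_le1 {x y pi}.
Definition tri_free := forall x y z, adj x y -> adj y z -> adj z x -> False.
Definition sq_free := forall x y v u, adj x y -> adj y v -> adj v u -> adj u x ->
  x != v -> y != u -> False.

Lemma girth_tri : girth_ge nb 5 -> tri_free.
Proof.
move=> hg x y z h1 h2 h3.
have := hg [:: x; y; z]; rewrite /graph_cycle /= h1 h2 h3 !inE !negb_or.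
by rewrite (adj_neq h1) (adj_neq h2) (eq_sym x z) (adj_neq h3) => /(_ isT).
Qed.

Lemma girth_sq : girth_ge nb 5 -> sq_free.
Proof.
move=> hg x y v u h1 h2 h3 h4 n1 n2.
have := hg [:: x; y; v; u]; rewrite /graph_cycle /= h1 h2 h3 h4 !inE !negb_or.
by rewrite (adj_neq h1) (adj_neq h2) (adj_neq h3) (eq_sym x u) (adj_neq h4) n1 n2 => /(_ isT).
Qed.

Lemma dist_pt x y u v : tri_free -> sq_free -> adj x y -> u \in nb x -> v \in nb y ->
  2 - (u == y)%:R - (v == x)%:R <= dist u v.
Proof.
move=> ht hs hxy hu hv.
have hxu : adj x u by [].
have hyv : adj y v by [].
case: (eqVneq u y) => [->|nuy] /=.
  apply: (@le_trans _ _ 1); last by apply: dist_ge1; exact: adj_neq hyv.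
  by case: (v == x); rewrite /=; lra.
case: (eqVneq v x) => [->|nvx] /=.
  apply: (@le_trans _ _ 1); last by apply: dist_ge1; rewrite eq_sym; exact: adj_neq hxu.
  lra.
rewrite !subr0; apply: dist_ge2.
  apply/eqP => e; subst v; apply: (ht x u y hxu _ _) => //; by rewrite adj_sym.
apply/negP => huv; apply: (hs x u v y hxu huv _ _ _ nuy).
- by rewrite adj_sym.
- by rewrite adj_sym.
- by rewrite eq_sym.
Qed.

Lemma cost_lb x y pi : tri_free -> sq_free -> adj x y -> coupling nb x y pi ->
  2 - unif x y - unif y x <= transport_cost nb x y pi.
Proof.
move=> ht hs hxy hc.
have hc' := hc; case: hc' => h0 _ H1 H2.
apply: le_trans (_ : \sum_(u <- nb x) \sum_(v <- nb y)
   pi u v * (2 - (u == y)%:R - (v == x)%:R) <= _); last first.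
  rewrite /transport_cost big_seq [X in _ <= X]big_seq; apply: ler_sum => u hu.
  rewrite big_seq [X in _ <= X]big_seq; apply: ler_sum => v hv.
  by rewrite ler_wpM2l // dist_pt.
have E : forall u v, pi u v * (2 - (u == y)%:R - (v == x)%:R) =
   2 * pi u v - (u == y)%:R * pi u v - (v == x)%:R * pi u v.
  by move=> u v; ring.
rewrite (eq_bigr (fun u => \sum_(v <- nb y) (2 * pi u v - (u == y)%:R * pi u v)
   - \sum_(v <- nb y) (v == x)%:R * pi u v)); last first.
  by move=> u _; rewrite -sumrB; apply: eq_bigr => v _; rewrite E.
rewrite sumrB (exchange_big _ _ _ _ _ (fun u v => (v == x)%:R * pi u v)) /=.
rewrite [X in _ <= _ - X](eq_bigr (fun v => (v == x)%:R * unif y v)); last first.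
  by move=> v _; rewrite -big_distrr /= H2.
rewrite (eq_bigr (fun u => 2 * unif x u - (u == y)%:R * unif x u)); last first.
  by move=> u _; rewrite sumrB -!big_distrr /= H1.
rewrite sumrB -big_distrr /= (@sum_unif x y hxy).
have hy : y \in nb x by [].
have hx : adj y x by rewrite adj_sym.
rewrite (@bigD1_seq _ _ _ _ (nb x) y _ hy (nb_uniq x)) (@bigD1_seq _ _ _ _ (nb y) x _ hx (nb_uniq y)) /=.
rewrite !big1 ?eqxx ?mul1r ?addr0 ?mulr1 //.
  by move=> v /negbTE ->; rewrite mul0r.
by move=> u /negbTE ->; rewrite mul0r.
Qed.

Lemma W1_ge1 x y : tri_free -> adj x y -> 1 <= W1 nb x y.
Proof.
move=> ht hxy; apply: W1_ge => // pi hc.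
rewrite -(@mass x y pi hxy hc) /transport_cost big_seq [X in _ <= X]big_seq.
apply: ler_sum => u hu; rewrite big_seq [X in _ <= X]big_seq; apply: ler_sum => v hv.
case: hc => h0 _ _ _; rewrite -{1}(mulr1 (pi u v)) ler_wpM2l // dist_ge1 //.
apply/eqP => e; subst v; apply: (ht x u y hu _ _) => //; by rewrite adj_sym.
Qed.

Lemma flat_of_cpl x y : tri_free -> adj x y ->
  (exists pi, coupling nb x y pi /\ forall u v, pi u v != 0 -> adj u v) ->
  kappa nb x y = 0.
Proof.
move=> ht hxy [pi [hc hs]]; rewrite /kappa.
have -> : W1 nb x y = 1.
  apply/eqP; rewrite eq_le W1_ge1 // andbT.
  by apply: le_trans (W1_le hc) (cost_le1 hxy hc hs).
by rewrite subrr.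
Qed.

Definition LDC := forall x y, adj x y ->
  deg x = 1%N \/ deg y = 1%N \/ (deg x <= 2 /\ deg y <= 2)%N.

Lemma LDC_of_flat : girth_ge nb 5 -> ricci_flat nb -> LDC.
Proof.
move=> hg hf x y hxy.
have ht := girth_tri hg; have hs := girth_sq hg.
have hyx : adj y x by rewrite adj_sym.
pose pi := prod_cpl x y.
have hW : W1 nb x y = 1 by have := hf x y hxy; rewrite /kappa => /eqP; rewrite subr_eq0 => /eqP <-.
have : 2 - unif x y - unif y x <= 1.
  by rewrite -[X in _ <= X]hW; apply: W1_ge => // p hp; exact: (@cost_lb x y p ht hs hxy hp).
rewrite (unif_in hxy) (unif_in hyx).
have dx := @deg_gt0 x y hxy; have dy := @deg_gt0 y x hyx.
move: (deg x) (deg y) dx dy => a b ha hb.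
have ha' : (a%:R : R) != 0 by rewrite pnatr_eq0 -lt0n.
have hb' : (b%:R : R) != 0 by rewrite pnatr_eq0 -lt0n.
have -> : 2 - a%:R^-1 - b%:R^-1 = (2 * (a%:R * b%:R) - b%:R - a%:R) / (a%:R * b%:R) :> R.
  by field; rewrite ha' hb'.
rewrite ler_pdivrMr ?mulr_gt0 ?ltr0n // mul1r lerBlDr lerBlDr -!natrM -!natrD ler_nat.
move=> h; nia.
Qed.

Lemma deg1_nb x y : adj x y -> deg x = 1%N -> nb x = [:: y].
Proof.
rewrite /Defs.adj /Defs.deg; case: (nb x) => [|a [|b s]] //=.
by rewrite inE => /eqP ->.
Qed.

Arguments deg1_nb {x y}.
Lemma deg2_nb x y : adj x y -> deg x = 2%N -> exists a, a != y /\ perm_eq (nb x) [:: y; a].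
Proof.
have := nb_uniq x.
rewrite /Defs.adj /Defs.deg; case: (nb x) => [|a [|b [|c s]]] //= hu hy _.
have nab : a != b by move: hu; rewrite inE andbT.
move: hy; rewrite !inE => /orP[] /eqP ->.
  by exists b; rewrite eq_sym nab perm_refl.
exists a; rewrite nab; split => //.
by rewrite (perm_catC [:: a] [:: b]).
Qed.

Arguments deg2_nb {x y}.
Lemma unif2 x y a u : deg x = 2%N -> perm_eq (nb x) [:: y; a] ->
  unif x u = ((u == y) || (u == a))%:R / 2.
Proof.
move=> hd hp; rewrite /Defs.unif (perm_mem hp) !inE hd.
by case: ((u == y) || (u == a)); rewrite /= ?mul1r ?mul0r.
Qed.

Arguments unif2 {x y a}.
Lemma unif1 x y u : nb x = [:: y] -> unif x u = (u == y)%:R.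
Proof.
move=> h; rewrite /Defs.unif /Defs.deg h !inE /=.
by case: (u == y); rewrite /= ?invr1.
Qed.

Arguments unif1 {x y}.
Lemma cpl_leaf x y : adj x y -> deg x = 1%N ->
  exists pi, coupling nb x y pi /\ forall u v, pi u v != 0 -> adj u v.
Proof.
move=> hxy hd; have hn := deg1_nb hxy hd.
have hyx : adj y x by rewrite adj_sym.
exists (fun u v => (u == y)%:R * unif y v); split; last first.
  move=> u v; case: (eqVneq u y) => [->|]; last by rewrite mul0r eqxx.
  rewrite mul1r /Defs.unif; case: ifP => //; by rewrite eqxx.
split.
- by move=> u v; rewrite mulr_ge0 ?ler0n ?unif_ge0.
- move=> u v; rewrite hn inE; case: (u == y); last by rewrite mul0r eqxx.
  by rewrite mul1r /Defs.unif; case: ifP => //; rewrite eqxx.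
- move=> u; rewrite -big_distrr /= (@sum_unif y x hyx) mulr1 (unif1 u hn) //.
- by move=> v; rewrite hn big_seq1 eqxx mul1r.
Qed.

Lemma cpl_leaf' x y : adj x y -> deg y = 1%N ->
  exists pi, coupling nb x y pi /\ forall u v, pi u v != 0 -> adj u v.
Proof.
move=> hxy hd.
have hyx : adj y x by rewrite adj_sym.
have hn := deg1_nb hyx hd.
exists (fun u v => (v == x)%:R * unif x u); split; last first.
  move=> u v; case: (eqVneq v x) => [->|]; last by rewrite mul0r eqxx.
  rewrite mul1r /Defs.unif; case: ifP => [hu _|]; last by rewrite eqxx.
  by rewrite adj_sym.
split.
- by move=> u v; rewrite mulr_ge0 ?ler0n ?unif_ge0.
- move=> u v; rewrite hn inE; case: (v == x); last by rewrite mul0r eqxx.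
  by rewrite mul1r /Defs.unif andbT; case: ifP => //; rewrite eqxx.
- by move=> u; rewrite hn big_seq1 eqxx mul1r.
- move=> v; rewrite -big_distrr /= (@sum_unif x y hxy) mulr1 (unif1 v hn) //.
Qed.

Lemma cpl_22 x y : adj x y -> deg x = 2%N -> deg y = 2%N ->
  exists pi, coupling nb x y pi /\ forall u v, pi u v != 0 -> adj u v.
Proof.
move=> hxy dx dy.
have hyx : adj y x by rewrite adj_sym.
have [a [nay pa]] := deg2_nb hxy dx.
have [b [nbx pb]] := deg2_nb hyx dy.
have ha : adj x a by rewrite /Defs.adj (perm_mem pa) !inE eqxx orbT.
have hb : adj y b by rewrite /Defs.adj (perm_mem pb) !inE eqxx orbT.
have nyb : y != b := adj_neq hb.
have nxa : x != a := adj_neq ha.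
have nya : y != a by rewrite eq_sym.
have nxb : x != b by rewrite eq_sym.
exists (fun u v => ((u == y) && (v == b))%:R / 2 + ((u == a) && (v == x))%:R / 2).
split; last first.
  move=> u v; case: (eqVneq u y) => [->|nuy].
    rewrite (negbTE nya) /= mul0r addr0.
    by case: (eqVneq v b) => [->|]; rewrite ?mul0r ?eqxx.
  rewrite /= mul0r add0r.
  case: (eqVneq u a) => [->|]; last by rewrite mul0r eqxx.
  by case: (eqVneq v x) => [->|]; rewrite ?mul0r ?eqxx // adj_sym.
split.
- by move=> u v; rewrite addr_ge0 // mulr_ge0 ?ler0n ?invr_ge0 ?ler0n.
- move=> u v; rewrite (perm_mem pa) (perm_mem pb) !inE.
  case: (eqVneq u y) => [->|nuy].
    rewrite (negbTE nya) /= mul0r addr0.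
    by case: (eqVneq v b) => [->|]; rewrite ?mul0r ?eqxx ?orbT.
  rewrite /= mul0r add0r.
  case: (eqVneq u a) => [_|]; last by rewrite mul0r eqxx.
  by case: (eqVneq v x) => [_|]; rewrite ?mul0r ?eqxx ?orbT.
- move=> u; rewrite (perm_big _ pb) !big_cons big_nil /= addr0 (unif2 u dx pa).
  rewrite !eqxx (negbTE nxb) (negbTE nbx) ?andbT ?andbF /=.
  case: (eqVneq u y) => [->|nuy]; first by rewrite (negbTE nya) /=; lra.
  rewrite /=; case: (u == a); rewrite /=; lra.
- move=> v; rewrite (perm_big _ pa) !big_cons big_nil /= addr0 (unif2 v dy pb).
  rewrite !eqxx (negbTE nya) (negbTE nay) ?andbT ?andbF /=.
  case: (eqVneq v x) => [->|nvx]; first by rewrite (negbTE nxb) /=; lra.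
  rewrite /=; case: (v == b); rewrite /=; lra.
Qed.

Lemma flat_of_LDC : tri_free -> LDC -> ricci_flat nb.
Proof.
move=> ht hl x y hxy; apply: flat_of_cpl => //.
have hyx : adj y x by rewrite adj_sym.
case: (hl x y hxy) => [h|[h|[h1 h2]]].
- exact: cpl_leaf.
- exact: cpl_leaf'.
case: (eqVneq (deg x) 1%N) => [e|nx]; first exact: cpl_leaf.
case: (eqVneq (deg y) 1%N) => [e|ny]; first exact: cpl_leaf'.
apply: cpl_22 => //.
- by have := @deg_gt0 x y hxy; move: nx h1; case: (deg x) => [|[|[|]]].
- by have := @deg_gt0 y x hyx; move: ny h2; case: (deg y) => [|[|[|]]].
Qed.

End G.

Local Open Scope ring_scope.
Local Open Scope classical_set_scope.
Set Implicit Arguments.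
Unset Strict Implicit.

Definition two (W : Type) (r : W -> W -> Prop) (i j : W) :=
  forall k1 k2, r i k1 -> r i k2 -> k1 = j \/ k2 = j \/ k1 = k2.
Definition mLDC (W : Type) (r : W -> W -> Prop) := forall i j, r i j ->
  (forall k, r i k -> k = j) \/ (forall k, r j k -> k = i) \/ (two r i j /\ two r j i).
Definition mtri (W : Type) (r : W -> W -> Prop) :=
  forall a b c, r a b -> r b c -> r c a -> False.
Definition msq (W : Type) (r : W -> W -> Prop) :=
  forall a b c d, r a b -> r b c -> r c d -> r d a -> a <> c -> b <> d -> False.

Section G2.
Variable V : eqType.
Variable nb : V -> seq V.
Hypothesis Hg : lf_simple_graph nb.
Hypothesis Hc : connected nb.

Local Notation adj := (adj nb).
Local Notation deg := (deg nb).

Lemma adj_sym2 x y : adj x y = adj y x.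
Proof. by case: Hg => _ _ H; rewrite /Defs.adj H. Qed.

Lemma adj_irr2 x : ~~ adj x x.
Proof. by case: Hg => _ H _; apply: H. Qed.

Lemma adj_neq2 x y : adj x y -> x != y.
Proof. by apply: contraTneq => ->; apply: adj_irr2. Qed.
Arguments adj_neq2 {x y}.

Lemma nb_uniq2 x : uniq (nb x).
Proof. by case: Hg. Qed.

Lemma closed_all (P : V -> Prop) s : P s -> (forall v w, P v -> adj v w -> P w) ->
  forall v, P v.
Proof.
move=> Ps cl v; case: (Hc s v) => p; rewrite /walk.
elim: p s Ps => [|a p IH] s Ps /=; first by move=> /eqP <-.
by case/andP => /andP[h1 h2] h3; apply: (IH a (cl s a Ps h1)); rewrite h2.
Qed.

Lemma iso_of_enum (W : Type) (r : W -> W -> Prop) (e : W -> V) :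
  injective e -> (forall v, exists i, e i = v) ->
  (forall i j, r i j <-> adj (e i) (e j)) -> isomorphic nb r.
Proof.
move=> inj sur hr.
pose f := fun v => proj1_sig (cid (sur v)).
have fK : forall v, e (f v) = v by move=> v; rewrite /f; case: cid.
exists f; split.
  by exists e => // i; apply: inj; rewrite fK.
by move=> x y; rewrite hr !fK.
Qed.

Lemma deg_one x y : adj x y -> (forall z, adj x z -> z = y) -> deg x = 1%N.
Proof.
move=> hxy H; apply/eqP; rewrite eqn_leq; apply/andP; split.
  have -> : 1%N = size [:: y] by [].
  apply: uniq_leq_size; first exact: nb_uniq2.
  by move=> z hz; rewrite inE (H z hz).
by move: hxy; rewrite /Defs.adj /Defs.deg; case: (nb x).
Qed.

Lemma deg_two x y : (forall z1 z2, adj x z1 -> adj x z2 -> z1 = y \/ z2 = y \/ z1 = z2) ->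
  (deg x <= 2)%N.
Proof.
move=> H; rewrite leqNgt; apply/negP.
have := nb_uniq2 x; rewrite /Defs.deg.
have mem : forall z, z \in nb x -> adj x z by [].
move: mem; case: (nb x) => [|p [|q [|t s]]] //= mem.
move=> U _.
have npq : p != q by apply: contraTneq U => ->; rewrite /= !inE eqxx.
have npt : p != t by apply: contraTneq U => ->; rewrite /= !inE eqxx ?orbT.
have nqt : q != t by apply: contraTneq U => ->; rewrite /= !inE eqxx ?orbT /= ?andbF.
have hp : adj x p by apply: mem; rewrite inE eqxx.
have hq : adj x q by apply: mem; rewrite !inE eqxx orbT.
have ht : adj x t by apply: mem; rewrite !inE eqxx !orbT.
case: (H p q hp hq) => [e1|[e1|e1]]; last by rewrite e1 eqxx in npq.
- case: (H q t hq ht) => [e2|[e2|e2]]; last by rewrite e2 eqxx in nqt.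
  + by rewrite e1 e2 eqxx in npq.
  + by rewrite e1 e2 eqxx in npt.
- case: (H p t hp ht) => [e2|[e2|e2]]; last by rewrite e2 eqxx in npt.
  + by rewrite e1 e2 eqxx in npq.
  + by rewrite e1 e2 eqxx in nqt.
Qed.

Lemma transfer (W : Type) (r : W -> W -> Prop) :
  isomorphic nb r -> mLDC r -> mtri r -> msq r ->
  (forall x y, adj x y -> deg x = 1%N \/ deg y = 1%N \/ (deg x <= 2 /\ deg y <= 2)%N)
  /\ girth_ge nb 5.
Proof.
move=> [f [[g fK gK] hr]] hl htri hsq.
have inj : injective f := can_inj fK.
split.
  move=> x y hxy; have hyx : adj y x by rewrite adj_sym2.
  case: (hl _ _ (proj1 (hr x y) hxy)) => [H|[H|[H1 H2]]].
  - left; apply: (deg_one hxy) => z hz; apply: inj; apply: H; exact/hr.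
  - right; left; apply: (deg_one hyx) => z hz; apply: inj; apply: H; exact/hr.
  - right; right; split.
    + apply: (@deg_two x y) => z1 z2 h1 h2.
      case: (H1 (f z1) (f z2) (proj1 (hr _ _) h1) (proj1 (hr _ _) h2)).
      * by move/inj => e; left.
      * by case=> /inj e; [right; left | right; right].
    + apply: (@deg_two y x) => z1 z2 h1 h2.
      case: (H2 (f z1) (f z2) (proj1 (hr _ _) h1) (proj1 (hr _ _) h2)).
      * by move/inj => e; left.
      * by case=> /inj e; [right; left | right; right].
move=> c; rewrite /graph_cycle => /and3P[hc hu hs].
case: c hc hu hs => [|a [|b [|d [|t [|]]]]] //=.
- rewrite andbT => /and3P[h1 h2 h3] _ _.
  exfalso; exact: (htri (f a) (f b) (f d) (proj1 (hr _ _) h1) (proj1 (hr _ _) h2) (proj1 (hr _ _) h3)).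
- rewrite andbT => /and4P[h1 h2 h3 h4] hu _.
  have nad : a != d by apply: contraTneq hu => ->; rewrite /= !inE eqxx ?orbT.
  have nbt : b != t by apply: contraTneq hu => ->; rewrite /= !inE eqxx ?orbT /= ?andbF.
  exfalso; apply: (hsq (f a) (f b) (f d) (f t) (proj1 (hr _ _) h1) (proj1 (hr _ _) h2) (proj1 (hr _ _) h3) (proj1 (hr _ _) h4)).
  + by move/inj => e; rewrite e eqxx in nad.
  + by move/inj => e; rewrite e eqxx in nbt.
Qed.

End G2.

Lemma ordE n (i j : 'I_n) : i = j <-> (i : nat) = j.
Proof. by split => [->|/val_inj]. Qed.

Lemma path_props n : mLDC (@path_graph n) /\ mtri (@path_graph n) /\ msq (@path_graph n).
Proof.
rewrite /mLDC /mtri /msq /two /path_graph; split; last split.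
- move=> i j h; right; right; split => k1 k2; rewrite !ordE; lia.
- move=> a b c; lia.
- move=> a b c d; rewrite !ordE; lia.
Qed.

Lemma ray_props : mLDC ray_graph /\ mtri ray_graph /\ msq ray_graph.
Proof.
rewrite /mLDC /mtri /msq /two /ray_graph; split; last split.
- move=> i j h; right; right; split => k1 k2; lia.
- move=> a b c; lia.
- move=> a b c d; lia.
Qed.

Lemma line_props : mLDC line_graph /\ mtri line_graph /\ msq line_graph.
Proof.
rewrite /mLDC /mtri /msq /two /line_graph; split; last split.
- move=> i j h; right; right; split => k1 k2; lia.
- move=> a b c; lia.
- move=> a b c d; lia.
Qed.

Lemma modS n i : (i < n)%N -> (i.+1 %% n = if i.+1 == n then 0 else i.+1)%N.
Proof.
move=> h; case: eqP => [->|ne]; first by rewrite modnn.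
by rewrite modn_small //; lia.
Qed.

Lemma cycE n (i j : 'I_n) : cycle_graph i j <->
  (((j : nat) = i.+1 /\ (i.+1 < n)%N) \/ (i.+1 = n /\ (j : nat) = 0%N) \/
   ((i : nat) = j.+1 /\ (j.+1 < n)%N) \/ (j.+1 = n /\ (i : nat) = 0%N)).
Proof.
rewrite /cycle_graph (modS (ltn_ord i)) (modS (ltn_ord j)).
have := ltn_ord i; have := ltn_ord j.
case: eqP; case: eqP; lia.
Qed.

Lemma cycle_props n : (5 <= n)%N ->
  mLDC (@cycle_graph n) /\ mtri (@cycle_graph n) /\ msq (@cycle_graph n).
Proof.
move=> hn; rewrite /mLDC /mtri /msq /two; split; last split.
- move=> i j h; right; right; split => k1 k2 h1 h2; move: h h1 h2; rewrite !cycE => h h1 h2;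
  rewrite !ordE; have := ltn_ord i; have := ltn_ord j; have := ltn_ord k1; have := ltn_ord k2; lia.
- move=> a b c; rewrite !cycE;
  have := ltn_ord a; have := ltn_ord b; have := ltn_ord c; lia.
- move=> a b c d h1 h2 h3 h4; move: h1 h2 h3 h4; rewrite !cycE => h1 h2 h3 h4; rewrite !ordE;
  have := ltn_ord a; have := ltn_ord b; have := ltn_ord c; have := ltn_ord d; lia.
Qed.

Lemma star_props n : mLDC (@star_graph n) /\ mtri (@star_graph n) /\ msq (@star_graph n).
Proof.
rewrite /mLDC /mtri /msq /two /star_graph; split; last split.
- move=> i j h.
  case: (eqVneq (i : nat) 0%N) => hi.
  + right; left => k; rewrite ordE; lia.
  + left => k; rewrite ordE; lia.
- move=> a b c; lia.
- move=> a b c d; rewrite !ordE; lia.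
Qed.

Local Open Scope ring_scope.
Set Implicit Arguments.
Unset Strict Implicit.

Section G3.
Variable V : eqType.
Variable nb : V -> seq V.
Hypothesis Hg : lf_simple_graph nb.
Hypothesis Hc : connected nb.
Hypothesis hl : LDC V nb.
Hypothesis ht : tri_free V nb.
Hypothesis hs : sq_free V nb.

Local Notation adj := (adj nb).
Local Notation deg := (deg nb).

Lemma asym x y : adj x y -> adj y x.
Proof. by rewrite (adj_sym2 Hg). Qed.

Lemma aneq x y : adj x y -> x != y.
Proof. by move=> h; apply: (adj_neq2 Hg h). Qed.

Lemma anot x : ~~ adj x x.
Proof. exact: (adj_irr2 Hg x). Qed.

Lemma star_case c a b d : adj c a -> adj c b -> adj c d -> a != b -> a != d -> b != d ->
  exists n, (3 <= n)%N /\ isomorphic nb (@star_graph n).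
Proof.
move=> ha hb hd nab nad nbd.
have dc : (3 <= deg c)%N.
  have -> : 3%N = size [:: a; b; d] by [].
  apply: uniq_leq_size; first by rewrite /= !inE !negb_or nab nad nbd.
  by move=> z; rewrite !inE => /or3P[] /eqP ->.
have leaf : forall u, adj c u -> nb u = [:: c].
  move=> u hu; case: (hl hu) => [e|[e|[e _]]].
  - by rewrite e in dc.
  - exact: (@deg1_nb V nb u c (asym hu) e).
  - by move: dc; rewrite leqNgt ltnS e.
have all : forall v, v = c \/ adj c v.
  apply: (closed_all Hc (s := c)); first by left.
  move=> v w [->|hv] hw; first by right.
  by left; move: hw; rewrite /Defs.adj (leaf v hv) inE => /eqP.
pose e := fun i : 'I_(deg c).+1 => if (i : nat) is k.+1 then nth c (nb c) k else c.
have cnot : forall k, (k < deg c)%N -> nth c (nb c) k != c.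
  move=> k hk; apply/eqP => E.
  by have := anot c; rewrite /Defs.adj -{1}E mem_nth.
exists (deg c).+1; split; first by apply: leq_trans dc _.
apply: (@iso_of_enum _ _ _ _ e).
- move=> [[|i] hi] [[|j] hj]; rewrite /e /= => E; apply: val_inj => //=.
  + by move: (cnot j hj); rewrite -E eqxx.
  + by move: (cnot i hi); rewrite E eqxx.
  + by move/eqP: E; rewrite nth_uniq ?(nb_uniq2 Hg) // => /eqP ->.
- move=> v; case: (all v) => [->|hv].
    by exists ord0.
  have hi : ((index v (nb c)).+1 < (deg c).+1)%N by rewrite ltnS index_mem.
  by exists (Ordinal hi); rewrite /e /= nth_index.
- move=> [[|i] hi] [[|j] hj]; rewrite /e /star_graph /=.
  + by split; [lia | move=> h; have := anot c; rewrite h].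
  + split => _; [exact: (mem_nth c (hj : (j < size (nb c))%N)) | lia].
  + split => _; [apply: asym; exact: (mem_nth c (hi : (i < size (nb c))%N)) | lia].
  + split; first lia.
    move=> h; have hi' : adj c (nth c (nb c) i) by exact: (mem_nth c (hi : (i < size (nb c))%N)).
    move: h; rewrite /Defs.adj (leaf _ hi') inE => /eqP E.
    by have := cnot j hj; rewrite E eqxx.
Qed.


Definition md2 := forall x a b d, adj x a -> adj x b -> adj x d -> a = b \/ a = d \/ b = d.

Definition nxt (p u : V) : V := head u [seq z <- nb u | z != p].

Fixpoint wk (p u : V) (k : nat) : V :=
  if k is k'.+1 then wk u (nxt p u) k' else p.

Lemma nxtP p u z : adj u z -> z != p -> adj u (nxt p u) /\ nxt p u != p.
Proof.
move=> hz nz; rewrite /nxt.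
have : z \in [seq z <- nb u | z != p] by rewrite mem_filter nz.
case E: [seq z <- nb u | z != p] => [|h l] //= _.
have : h \in [seq z <- nb u | z != p] by rewrite E mem_head.
by rewrite mem_filter => /andP[].
Qed.

Lemma wkSS k p u : wk p u k.+2 = nxt (wk p u k) (wk p u k.+1).
Proof. by elim: k p u => [|k IH] p u //=; rewrite -IH. Qed.

Definition has_other p u := exists z, adj u z /\ z != p.

Section NoLeaf.
Hypothesis HO : forall p u, adj u p -> has_other p u.
Hypothesis hmd : md2.

Lemma wk_adj p u : adj p u -> forall k, adj (wk p u k) (wk p u k.+1).
Proof.
move=> h k; elim: k p u h => [|k IH] p u h //=.
have [z [hz nz]] := HO (asym h).
have [h1 _] := nxtP hz nz.
exact: IH.
Qed.

Lemma wk_nb p u : adj p u -> forall k, wk p u k.+2 != wk p u k.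
Proof.
move=> h k; elim: k p u h => [|k IH] p u h.
  have [z [hz nz]] := HO (asym h); have [_ h2] := nxtP hz nz.
  by rewrite wkSS.
have [z [hz nz]] := HO (asym h); have [h1 _] := nxtP hz nz.
exact: IH.
Qed.

Variables s t : V.
Hypothesis hst : adj s t.

Definition zz (i : int) : V :=
  match i with Posz k => wk s t k | Negz k => wk t s k.+2 end.

Lemma zP (k : nat) : zz k%:Z = wk s t k.
Proof. by []. Qed.

Lemma zN (k : nat) : zz (- k%:Z) = wk t s k.+1.
Proof. by case: k. Qed.

Lemma intcase (i : int) : exists k : nat, i = k%:Z \/ i = - (k.+1)%:Z.
Proof. by case: i => k; exists k; [left | right; rewrite NegzE]. Qed.

Lemma zadj i : adj (zz i) (zz (i + 1)).
Proof.
have hts : adj t s by apply: asym.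
have [k [->|->]] := intcase i.
  have -> : k%:Z + 1 = (k.+1)%:Z by lia.
  by rewrite !zP; apply: wk_adj.
have -> : - (k.+1)%:Z + 1 = - k%:Z by lia.
by rewrite !zN; apply: asym; apply: wk_adj.
Qed.

Lemma zneq i : zz (i + 1) != zz (i - 1).
Proof.
have hts : adj t s by apply: asym.
have [[|k] [->|->]] := intcase i.
- have -> : 0%:Z + 1 = (1%N)%:Z by lia.
  have -> : 0%:Z - 1 = - (1%N)%:Z by lia.
  rewrite zP zN /=; rewrite eq_sym; exact: (wk_nb hts 0).
- have -> : - (1%N)%:Z + 1 = - (0%N)%:Z by lia.
  have -> : - (1%N)%:Z - 1 = - (2%N)%:Z by lia.
  rewrite !zN eq_sym; exact: (wk_nb hts 1).
- have -> : (k.+1)%:Z + 1 = (k.+2)%:Z by lia.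
  have -> : (k.+1)%:Z - 1 = k%:Z by lia.
  rewrite !zP; exact: (wk_nb hst k).
- have -> : - (k.+2)%:Z + 1 = - (k.+1)%:Z by lia.
  have -> : - (k.+2)%:Z - 1 = - (k.+3)%:Z by lia.
  rewrite !zN eq_sym; exact: (wk_nb hts k.+2).
Qed.

Lemma znb i v : adj (zz i) v -> v = zz (i - 1) \/ v = zz (i + 1).
Proof.
move=> hv.
have h1 : adj (zz i) (zz (i - 1)).
  by apply: asym; have := zadj (i - 1); rewrite (_ : i - 1 + 1 = i) //; lia.
case: (hmd h1 (zadj i) hv) => [E|[E|E]].
- by have := zneq i; rewrite E eqxx.
- by left.
- by right.
Qed.

Lemma line_case : (forall i j, zz i = zz j -> i = j) -> isomorphic nb line_graph.
Proof.
move=> inj; apply: (@iso_of_enum _ _ _ _ zz) => //.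
- move=> v; apply: (closed_all Hc (P := fun v => exists i, zz i = v) (s := s)).
    by exists 0.
  move=> _ w [i <-] hw; case: (znb hw) => ->; eexists; reflexivity.
- move=> i j; rewrite /line_graph; split.
    case=> <-; first exact: zadj.
    by apply: asym; apply: zadj.
  by move/znb => [/inj E|/inj E]; lia.
Qed.

Section Cyc.
Variable a : int.
Variable d : nat.
Hypothesis Ea : zz a = zz (a + d%:Z).
Hypothesis mn : forall (d' : nat) a', (0 < d')%N -> (d' < d)%N -> zz a' != zz (a' + d'%:Z).
Hypothesis d3 : (3 <= d)%N.

Lemma einj (i j : nat) : (i < d)%N -> (j < d)%N -> zz (a + i%:Z) = zz (a + j%:Z) -> i = j.
Proof.
move=> hi hj E; case: (ltngtP i j) => // hij; exfalso.
  have h1 : (0 < j - i)%N by lia. have h2 : (j - i < d)%N by lia.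
  have := mn (a + i%:Z) h1 h2.
  by rewrite (_ : a + i%:Z + (j - i)%N%:Z = a + j%:Z) ?E ?eqxx //; lia.
have h1 : (0 < i - j)%N by lia. have h2 : (i - j < d)%N by lia.
have := mn (a + j%:Z) h1 h2.
by rewrite (_ : a + j%:Z + (i - j)%N%:Z = a + i%:Z) ?E ?eqxx //; lia.
Qed.

Lemma P1 : zz (a - 1) = zz (a + (d.-1)%:Z).
Proof.
have h : adj (zz (a + d%:Z)) (zz (a - 1)).
  by rewrite -Ea; apply: asym; have := zadj (a - 1); rewrite (_ : a - 1 + 1 = a) //; lia.
case: (znb h) => E.
  by rewrite E; congr zz; lia.
have h2 : adj (zz (a + d%:Z)) (zz (a + 1)) by rewrite -Ea; apply: zadj.
case: (znb h2) => E2.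
  have h1 : (0 < d - 2)%N by lia. have h3 : (d - 2 < d)%N by lia.
  have := mn (a + 1) h1 h3.
  by rewrite (_ : a + 1 + (d - 2)%N%:Z = a + d%:Z - 1) ?E2 ?eqxx //; lia.
by have := zneq a; rewrite E E2 eqxx.
Qed.

Definition idxS (i : nat) : nat := if i.+1 == d then 0%N else i.+1.
Definition idxP (i : nat) : nat := if i == 0%N then d.-1 else i.-1.

Lemma eS (i : nat) : (i < d)%N -> zz (a + i%:Z + 1) = zz (a + (idxS i)%:Z).
Proof.
move=> hi; rewrite /idxS; case: eqP => h.
  by rewrite addr0 Ea; congr zz; lia.
by congr zz; lia.
Qed.

Lemma eP (i : nat) : (i < d)%N -> zz (a + i%:Z - 1) = zz (a + (idxP i)%:Z).
Proof.
move=> hi; rewrite /idxP; case: eqP => h.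
  by rewrite h addr0 P1.
by congr zz; lia.
Qed.

Lemma enb (i : nat) v : (i < d)%N -> adj (zz (a + i%:Z)) v ->
  v = zz (a + (idxS i)%:Z) \/ v = zz (a + (idxP i)%:Z).
Proof.
by move=> hi /znb [->|->]; [right; rewrite -eP | left; rewrite -eS].
Qed.

Lemma cyc_iso : isomorphic nb (@cycle_graph d).
Proof.
have d0 : (0 < d)%N by lia.
have hS : forall i, (i < d)%N -> (idxS i < d)%N by move=> i hi; rewrite /idxS; case: eqP; lia.
have hP : forall i, (i < d)%N -> (idxP i < d)%N by move=> i hi; rewrite /idxP; case: eqP; lia.
have rE : forall i j : 'I_d, cycle_graph i j <-> ((j : nat) = idxS i \/ (i : nat) = idxS j).
  move=> i j; rewrite cycE /idxS; have := ltn_ord i; have := ltn_ord j.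
  case: eqP; case: eqP; lia.
have PS : forall i j, (i < d)%N -> (j < d)%N -> (j == idxP i) = (i == idxS j).
  move=> i j hi hj; rewrite /idxP /idxS.
  by case: eqP; case: eqP; case: eqP; case: eqP; lia.
apply: (@iso_of_enum _ _ _ _ (fun i : 'I_d => zz (a + (i : nat)%:Z))).
- by move=> i j /einj E; apply: val_inj; apply: E.
- move=> v; apply: (closed_all Hc (P := fun v => exists i : 'I_d, zz (a + (i : nat)%:Z) = v) (s := zz a)).
    by exists (Ordinal d0); rewrite addr0.
  move=> _ w [i <-] hw; case: (enb (ltn_ord i) hw) => ->.
    by exists (Ordinal (hS _ (ltn_ord i))).
  by exists (Ordinal (hP _ (ltn_ord i))).
- move=> i j; rewrite rE; split.
    case=> E.
      by rewrite E -eS //; apply: zadj.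
    by rewrite E -eS //; apply: asym; apply: zadj.
  move=> /(enb (ltn_ord i)) [E|E].
    by left; apply: (einj (ltn_ord j) (hS _ (ltn_ord i))); exact: E.
  right; apply/eqP; rewrite -PS //; apply/eqP.
  exact: (einj (ltn_ord j) (hP _ (ltn_ord i)) E).
Qed.

Lemma cyc_ge5 : (5 <= d)%N.
Proof.
rewrite leqNgt; apply/negP => hd.
have h3 : forall k : nat, d = k -> zz (a + k%:Z) = zz a by move=> k <-.
case: (eqVneq d 3%N) => [e3|n3].
  apply: (ht (x := zz a) (y := zz (a + 1)) (z := zz (a + (2%N)%:Z))).
  - exact: zadj.
  - by have := zadj (a + 1); rewrite (_ : a + 1 + 1 = a + (2%N)%:Z) //; lia.
  - have := zadj (a + (2%N)%:Z); rewrite (_ : a + (2%N)%:Z + 1 = a + (3%N)%:Z); last by lia.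
    by rewrite (h3 _ e3).
have e4 : d = 4%N by lia.
apply: (hs (x := zz a) (y := zz (a + 1)) (v := zz (a + (2%N)%:Z)) (u := zz (a + (3%N)%:Z))).
- exact: zadj.
- by have := zadj (a + 1); rewrite (_ : a + 1 + 1 = a + (2%N)%:Z) //; lia.
- by have := zadj (a + (2%N)%:Z); rewrite (_ : a + (2%N)%:Z + 1 = a + (3%N)%:Z) //; lia.
- have := zadj (a + (3%N)%:Z); rewrite (_ : a + (3%N)%:Z + 1 = a + (4%N)%:Z); last by lia.
  by rewrite (h3 _ e4).
- by apply: (mn (d' := 2%N)); lia.
- have := mn (d' := 2%N) (a + 1); rewrite (_ : a + 1 + (2%N)%:Z = a + (3%N)%:Z); last by lia.
  by apply; lia.
Qed.

End Cyc.

Lemma cycle_case : ~ (forall i j, zz i = zz j -> i = j) ->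
  exists n, (5 <= n)%N /\ isomorphic nb (@cycle_graph n).
Proof.
move=> ninj.
have [i [j [nij E]]] : exists i j, i <> j /\ zz i = zz j.
  apply: contrapT => H; apply: ninj => i j E; apply: contrapT => nij.
  by apply: H; exists i, j.
have ex : exists d, (0 < d)%N && `[< exists a, zz a = zz (a + d%:Z) >].
  case: (ltgtP i j) => [hij|hij|hij]; last by [].
    exists `|j - i|%N; apply/andP; split; first by lia.
    by apply/asboolP; exists i; rewrite E; congr zz; lia.
  exists `|i - j|%N; apply/andP; split; first by lia.
  by apply/asboolP; exists j; rewrite -E; congr zz; lia.
case: (ex_minnP ex) => d /andP[d0 /asboolP [a Ea]] dmin.
have mn : forall (d' : nat) a', (0 < d')%N -> (d' < d)%N -> zz a' != zz (a' + d'%:Z).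
  move=> d' a' h1 h2; apply/eqP => E'.
  have : (0 < d')%N && `[< exists a, zz a = zz (a + d'%:Z) >].
    by rewrite h1; apply/asboolP; exists a'.
  by move/dmin; lia.
have d3 : (3 <= d)%N.
  rewrite leqNgt; apply/negP => hd.
  have : d = 1%N \/ d = 2%N by lia.
  case=> Ed; rewrite Ed in Ea.
    by have := zadj a; rewrite (_ : a + 1 = a + (1%N)%:Z) // -Ea (negbTE (anot _)).
  have := zneq (a + 1).
  rewrite (_ : a + 1 + 1 = a + (2%N)%:Z); last by lia.
  by rewrite (_ : a + 1 - 1 = a) -?Ea ?eqxx //; lia.
exists d; split; first exact: (cyc_ge5 Ea mn d3).
exact: (cyc_iso Ea mn d3).
Qed.

End NoLeaf.


Section Leaf.
Hypothesis hmd : md2.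
Variables s t : V.
Hypothesis hst : adj s t.
Hypothesis hleaf : forall z, adj s z -> z = t.

Local Notation w := (wk s t).

Definition good k := forall i, (0 < i < k)%N -> has_other (w i.-1) (w i).

Lemma good_mono k k' : good k' -> (k <= k')%N -> good k.
Proof. by move=> h hk i hi; apply: h; lia. Qed.

Lemma gA k : good k -> forall i, (i < k)%N -> adj (w i) (w i.+1).
Proof.
move=> hk [|i] hi //.
have [z [hz nz]] := hk i.+1 (ltac:(lia)).
by rewrite wkSS; case: (nxtP hz nz).
Qed.

Lemma gB k : good k -> forall i, (0 < i < k)%N -> w i.+1 != w i.-1.
Proof.
move=> hk [|i] hi //.
have [z [hz nz]] := hk i.+1 hi.
by rewrite wkSS; case: (nxtP hz nz).
Qed.

Lemma gnb k : good k -> forall i v, (0 < i < k)%N -> adj (w i) v -> v = w i.-1 \/ v = w i.+1.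
Proof.
move=> hk i v hi hv.
have h1 : adj (w i) (w i.-1).
  apply: asym; have := gA hk (i := i.-1) (ltac:(lia)); rewrite prednK //; lia.
case: (hmd h1 (gA hk (ltac:(lia) : (i < k)%N)) hv) => [E|[E|E]].
- by have := gB hk hi; rewrite E eqxx.
- by left.
- by right.
Qed.

Lemma ginj k : good k -> forall i j, (i <= k)%N -> (j <= k)%N -> w i = w j -> i = j.
Proof.
elim: k => [|k IH] hk i j hi hj E; first by lia.
have hk' := good_mono hk (leqnSn k).
have key : forall i0, (i0 <= k)%N -> w k.+1 = w i0 -> False.
  move=> i0 hi0 E0.
  have hA := gA hk (ltnSn k).
  case: (eqVneq i0 k) => [e|ne].
    by move: hA; rewrite E0 e (negbTE (anot _)).
  case: (eqVneq i0 k.-1) => [e|ne2].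
    by have := gB hk (i := k) (ltac:(lia)); rewrite E0 e eqxx.
  case: (eqVneq i0 0%N) => [e|ne3].
    move: hA; rewrite E0 e /= => /asym /hleaf Ek.
    have := IH hk' k 1%N (leqnn k) (ltac:(lia)) Ek; lia.
  have := gnb hk (i := i0) (v := w k) (ltac:(lia)); rewrite -E0 => /(_ (asym hA)).
  case=> E1.
    have := IH hk' k i0.-1 (leqnn k) (ltac:(lia)) E1; lia.
  have := IH hk' k i0.+1 (leqnn k) (ltac:(lia)) E1; lia.
case: (leqP i k) => hi'; case: (leqP j k) => hj'.
- exact: IH.
- by exfalso; apply: (key i hi'); rewrite E (_ : j = k.+1) //; lia.
- by exfalso; apply: (key j hj'); rewrite -E (_ : i = k.+1) //; lia.
- lia.
Qed.

Lemma path_case m : (0 < m)%N -> good m -> ~ has_other (w m.-1) (w m) ->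
  isomorphic nb (@path_graph m.+1).
Proof.
move=> m0 hg hstuck.
have pnb : forall i v, (i <= m)%N -> adj (w i) v ->
    exists j, (j <= m)%N /\ v = w j /\ (i.+1 = j \/ j.+1 = i).
  move=> i v hi hv.
  case: (eqVneq i 0%N) => [e|ne].
    exists 1%N; split; first lia; split; last by left; rewrite e.
    by move: hv; rewrite e => /hleaf.
  case: (eqVneq i m) => [e|ne2].
    exists m.-1; split; first lia; split; last by right; lia.
    apply: contrapT => nv; apply: hstuck; exists v; split; first by rewrite -e.
    by apply/eqP.
  case: (gnb hg (ltac:(lia) : (0 < i < m)%N) hv) => ->.
    by exists i.-1; split; first lia; split => //; right; lia.
  by exists i.+1; split; first lia; split => //; left.
apply: (@iso_of_enum _ _ _ _ (fun i : 'I_m.+1 => w i)).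
- move=> i j E; apply: val_inj; apply: (ginj hg) => //; rewrite -ltnS; exact: ltn_ord.
- move=> v; apply: (closed_all Hc (P := fun v => exists i : 'I_m.+1, w i = v) (s := s)).
    by exists ord0.
  move=> _ v0 [i <-] hv; have [j [hj [-> _]]] := pnb i v0 (ltac:(have := ltn_ord i; lia)) hv.
  by exists (Ordinal (hj : (j < m.+1)%N)).
- move=> i j; rewrite /path_graph; have := ltn_ord i; have := ltn_ord j => hj hi; split.
    case=> E.
      by rewrite -E; apply: (gA hg); lia.
    by rewrite -E; apply: asym; apply: (gA hg); lia.
  move=> /(pnb i _ (ltac:(lia) : (i <= m)%N)) [j' [hj' [E h]]].
  by have := ginj hg (ltac:(lia) : (j <= m)%N) hj' E; lia.
Qed.

Lemma ray_case : (forall k, good k) -> isomorphic nb ray_graph.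
Proof.
move=> hg.
have rnb : forall i v, adj (w i) v -> v = w i.+1 \/ ((0 < i)%N /\ v = w i.-1).
  move=> [|i] v hv; first by left; apply: hleaf.
  case: (gnb (hg i.+2) (ltac:(lia) : (0 < i.+1 < i.+2)%N) hv) => ->; [right | left] => //.
apply: (@iso_of_enum _ _ _ _ w).
- move=> i j E; apply: (ginj (hg (maxn i j))) => //; lia.
- move=> v; apply: (closed_all Hc (P := fun v => exists i, w i = v) (s := s)).
    by exists 0%N.
  move=> _ v0 [i <-] hv; case: (rnb i v0 hv) => [->|[_ ->]]; eexists; reflexivity.
- move=> i j; rewrite /ray_graph; split.
    case=> <-; first exact: (gA (hg i.+1)).
    by apply: asym; apply: (gA (hg j.+1)).
  case/rnb => [E|[hi E]].
    by have := ginj (hg (maxn i.+1 j)) (ltac:(lia) : (j <= maxn i.+1 j)%N) (ltac:(lia) : (i.+1 <= maxn i.+1 j)%N) E; lia.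
  by have := ginj (hg (maxn i j)) (ltac:(lia) : (j <= maxn i j)%N) (ltac:(lia) : (i.-1 <= maxn i j)%N) E; lia.
Qed.

End Leaf.

End G3.

Unset Implicit Arguments.
Set Strict Implicit.

Lemma structure (V : eqType) (nb : V -> seq V) :
  lf_simple_graph nb -> connected nb -> LDC V nb -> tri_free V nb -> sq_free V nb ->
  (exists x y : V, x != y) ->
   (exists n, (2 <= n)%N /\ isomorphic nb (@path_graph n)) \/
   isomorphic nb ray_graph \/
   isomorphic nb line_graph \/
   (exists n, (5 <= n)%N /\ isomorphic nb (@cycle_graph n)) \/
   (exists n, (3 <= n)%N /\ isomorphic nb (@star_graph n)).
Proof.
move=> Hg Hc hl ht hs [x [y nxy]].
case: (pselect (exists c a b d, [/\ adj nb c a, adj nb c b, adj nb c d & [&& a != b, a != d & b != d]])).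
  move=> [c [a [b [d [h1 h2 h3 /and3P[n1 n2 n3]]]]]].
  by right; right; right; right; apply: (star_case Hg Hc hl h1 h2 h3).
move=> nstar.
have hmd : md2 nb.
  move=> c a b d h1 h2 h3; apply: contrapT => H; apply: nstar.
  exists c, a, b, d; split => //.
  case: (eqVneq a b) => [e|_]; first by exfalso; apply: H; left.
  case: (eqVneq a d) => [e|_]; first by exfalso; apply: H; right; left.
  case: (eqVneq b d) => [e|_] //; by exfalso; apply: H; right; right.
have [s0 [t0 hst0]] : exists s t, adj nb s t.
  case: (Hc x y) => [[|a p]]; rewrite /walk /=.
    by move/eqP => e; rewrite e eqxx in nxy.
  by case/andP => /andP[h _] _; exists x, a.
case: (pselect (exists s t, adj nb s t /\ forall z, adj nb s z -> z = t)).
  move=> [s [t [hst hleaf]]].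
  case: (pselect (forall k, good nb s t k)) => hgood.
    by right; left; apply: (ray_case Hg Hc hmd hst hleaf).
  left.
  have ex : exists k, (0 < k)%N && ~~ `[< has_other nb (wk nb s t k.-1) (wk nb s t k) >].
    apply: contrapT => H; apply: hgood => k i hi; apply: contrapT => ho.
    by apply: H; exists i; rewrite (_ : (0 < i)%N); [apply/asboolP | lia].
  case: (ex_minnP ex) => m /andP[m0 /asboolP hm] mmin.
  exists m.+1; split; first by lia.
  apply: (path_case Hg Hc hmd hst hleaf m0) => // i hi.
  apply: contrapT => ho.
  have : (0 < i)%N && ~~ `[< has_other nb (wk nb s t i.-1) (wk nb s t i) >].
    by rewrite (_ : (0 < i)%N); [apply/asboolP | lia].
  by move/mmin; lia.
move=> nleaf.
have HO : forall p u, adj nb u p -> has_other nb p u.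
  move=> p u hup; apply: contrapT => ho; apply: nleaf; exists u, p; split => // z hz.
  apply: contrapT => nz; apply: ho; exists z; split => //; exact/eqP.
case: (pselect (forall i j, zz nb s0 t0 i = zz nb s0 t0 j -> i = j)) => hinj.
  by right; right; left; apply: (line_case Hg Hc HO hmd hst0 hinj).
by right; right; right; left; apply: (cycle_case Hg Hc ht hs HO hmd hst0 hinj).
Qed.

Theorem corollary3p4 (V : eqType) (nb : V -> seq V) :
  lf_simple_graph nb -> connected nb -> (exists x y : V, x != y) ->
  (ricci_flat nb /\ girth_ge nb 5 <->
   (exists n, (2 <= n)%N /\ isomorphic nb (@path_graph n)) \/
   isomorphic nb ray_graph \/
   isomorphic nb line_graph \/
   (exists n, (5 <= n)%N /\ isomorphic nb (@cycle_graph n)) \/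
   (exists n, (3 <= n)%N /\ isomorphic nb (@star_graph n))).
Proof.
move=> Hg Hc hxy; split.
  move=> [hf hgi].
  apply: structure => //.
  - exact: (@LDC_of_flat V nb Hg Hc hgi hf).
  - exact: (@girth_tri V nb Hg hgi).
  - exact: (@girth_sq V nb Hg hgi).
have fin : forall (W : Type) (r : W -> W -> Prop), isomorphic nb r ->
    mLDC r /\ mtri r /\ msq r -> ricci_flat nb /\ girth_ge nb 5.
  move=> W r hi [h1 [h2 h3]].
  have [hL hG] := transfer Hg hi h1 h2 h3.
  split => //; apply: (@flat_of_LDC V nb Hg Hc (@girth_tri V nb Hg hG)); exact: hL.
case=> [[n [_ hi]]|[hi|[hi|[[n [hn hi]]|[n [_ hi]]]]]].
- exact: (fin _ _ hi (path_props n)).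
- exact: (fin _ _ hi ray_props).
- exact: (fin _ _ hi line_props).
- exact: (fin _ _ hi (cycle_props hn)).
- exact: (fin _ _ hi (star_props n)).
Qed.
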